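(* Let $A\colon X\to Y$ be a compact linear operator between separable Hilbert spaces with infinite-dimensional range, where $X=L^2(\mathcal{M})$, with singular value decomposition $Ax=\sum_{n=1}^\infty\sigma_n\langle x,v_n\rangle_X u_n$. Let $(c_n)_{n\in\mathbb{N}}$ be real numbers with $c_n\ge c_0>0$ for all $n$, and for $\alpha>0$ let $T^c_\alpha y=\sum_{n=1}^\infty\frac{\sigma_n}{\sigma_n^2+\alpha c_n}\langle y,u_n\rangle_Y v_n$. Let $$U=\Big\{y\in Y:\ \sum_{n=1}^\infty\frac{|\langle y,u_n\rangle_Y|}{\sigma_n}\|v_n\|_{L^\infty(\mathcal{M})}<\infty\Big\}.$$ Then for every $y\in U$, $$\|A^\dagger y-T^c_\alpha y\|_{L^\infty(\mathcal{M})}\to 0\qquad\text{as }\alpha\to0.$$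
   Context: $\mathcal{M}$ is a measure space; $\|v_n\|_{L^\infty(\mathcal{M})}$ may be $+\infty$ (with the usual convention $0\cdot\infty=0$ in the defining sum of $U$). The SVD consists of orthonormal systems $(u_n)$ in $Y$ and $(v_n)$ in $X$ and a non-increasing sequence $(\sigma_n)$ of positive reals with $\sigma_n\to0$. The pseudoinverse is $A^\dagger y=\sum_{n}\sigma_n^{-1}\langle y,u_n\rangle_Y v_n$ for $y$ with $\sum_n\sigma_n^{-2}|\langle y,u_n\rangle_Y|^2<\infty$. *)

(* Defs.v *)
From HB Require Import structures.
From mathcomp Require Import all_boot all_order all_algebra.
From mathcomp Require Import all_classical all_reals all_analysis.
Set Implicit Arguments. Unset Strict Implicit. Unset Printing Implicit Defensive.
Import Order.TTheory GRing.Theory Num.Theory.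
Import numFieldNormedType.Exports.
Local Open Scope classical_set_scope.
Local Open Scope ring_scope.

Definition inner_product_on (R : realType) (Y : normedModType R)
    (ip : Y -> Y -> R) : Prop :=
  [/\ (forall (a : R) (x y z : Y), ip (a *: x + y) z = a * ip x z + ip y z),
      (forall x y : Y, ip x y = ip y x) &
      (forall y : Y, ip y y = `|y| ^+ 2)].

Definition separable_space (T : topologicalType) : Prop :=
  exists D : set T, countable D /\ closure D = setT.

Definition is_L2 d (M : measurableType d) (R : realType)
    (mu : {measure set M -> \bar R}) (f : M -> R) : Prop :=
  measurable_fun setT f /\ (\int[mu]_x ((f x) ^+ 2)%:E < +oo)%E.

Definition L2ip d (M : measurableType d) (R : realType)
    (mu : {measure set M -> \bar R}) (f g : M -> R) : R :=
  Rintegral mu setT (fun x => f x * g x).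

Definition L2_orthonormal d (M : measurableType d) (R : realType)
    (mu : {measure set M -> \bar R}) (v : nat -> M -> R) : Prop :=
  (forall n, is_L2 mu (v n)) /\
  (forall n m, L2ip mu (v n) (v m) = (n == m)%:R).

Definition ip_orthonormal (R : realType) (Y : Type) (ip : Y -> Y -> R)
    (u : nat -> Y) : Prop :=
  forall n m, ip (u n) (u m) = (n == m)%:R.

Definition is_L2_series d (M : measurableType d) (R : realType)
    (mu : {measure set M -> \bar R}) (v : nat -> M -> R) (b : nat -> R)
    (F : M -> R) : Prop :=
  is_L2 mu F /\
  ((fun N => \int[mu]_x (((F x - \sum_(n < N) b n * v n x) ^+ 2)%:E))
     @ \oo --> 0%E)%E.

Definition Linf_norm d (M : measurableType d) (R : realType)
    (mu : {measure set M -> \bar R}) (f : M -> R) : \bar R :=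
  Lnorm mu +oo%E (EFin \o f).

(* Main.v *)
Require Import Defs.
From HB Require Import structures.
From mathcomp Require Import all_boot all_order all_algebra.
From mathcomp Require Import all_classical all_reals all_analysis.
From mathcomp Require Import ess_sup_inf measurable_realfun.
From mathcomp Require Import ring lra.
Import Order.TTheory GRing.Theory Num.Theory.
Import numFieldNormedType.Exports.
Local Open Scope classical_set_scope.
Local Open Scope ring_scope.

Lemma key d (M : measurableType d) (R : realType) (mu : {measure set M -> \bar R})
  (F G : M -> R) (S T : nat -> M -> R) (eps : R) :
  0 < eps -> measurable_fun setT F -> measurable_fun setT G ->
  (forall N, measurable_fun setT (S N)) -> (forall N, measurable_fun setT (T N)) ->
  ((fun N => \int[mu]_x (((F x - S N x) ^+ 2)%:E)) @ \oo --> 0)%E ->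
  ((fun N => \int[mu]_x (((G x - T N x) ^+ 2)%:E)) @ \oo --> 0)%E ->
  (\forall x \ae mu, forall N, `|S N x - T N x| <= eps / 2) ->
  \forall x \ae mu, `|F x - G x| <= eps.
Proof.
move=> e0 mF mG mS mT cF cG hST.
pose a := (eps / 4) ^+ 2.
have a0 : 0 < a by rewrite exprn_gt0 // divr_gt0.
pose gF : nat -> M -> \bar R := fun N x => ((F x - S N x) ^+ 2)%:E.
pose gG : nat -> M -> \bar R := fun N x => ((G x - T N x) ^+ 2)%:E.
have mgF N : measurable_fun setT (gF N).
  by apply/measurable_EFinP; apply: measurable_funX; exact: measurable_funB.
have mgG N : measurable_fun setT (gG N).
  by apply/measurable_EFinP; apply: measurable_funX; exact: measurable_funB.
pose A N := setT `&` [set x | (`|gF N x| >= a%:E)%E].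
pose B N := setT `&` [set x | (`|gG N x| >= a%:E)%E].
have mA N : measurable (A N).
  by apply: emeasurable_fun_c_infty => //; exact: measurableT_comp.
have mB N : measurable (B N).
  by apply: emeasurable_fun_c_infty => //; exact: measurableT_comp.
pose W := \bigcap_N (A N `|` B N).
have mW : measurable W by apply: bigcapT_measurable => N; exact: measurableU.
have absF N : (\int[mu]_(x in setT) `|gF N x| = \int[mu]_x gF N x)%E.
  by apply: eq_integral => x _; rewrite gee0_abs // lee_fin sqr_ge0.
have absG N : (\int[mu]_(x in setT) `|gG N x| = \int[mu]_x gG N x)%E.
  by apply: eq_integral => x _; rewrite gee0_abs // lee_fin sqr_ge0.
have W0 : mu W = 0%E.
  apply/eqP; rewrite eq_le measure_ge0 andbT.
  rewrite -(@pmule_rle0 _ a%:E) ?lte_fin//.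
  have hc : ((fun N => \int[mu]_x gF N x + \int[mu]_x gG N x) @ \oo --> 0)%E.
    by rewrite -[X in _ --> X]adde0; apply: cvgeD.
  apply: (cvge_to_ge hc).
    apply: nearW => N.
    apply: (@le_trans _ _ (a%:E * (mu (A N) + mu (B N)))%E).
      apply: lee_wpmul2l; first by rewrite lee_fin ltW.
      apply: le_trans (measureU2 _ (mA N) (mB N)).
      apply: le_measure; rewrite ?inE //; first exact: measurableU.
      by move=> x Wx; exact: (Wx N I).
    rewrite muleDr //; last by rewrite ge0_adde_def // inE measure_ge0.
    apply: (@leeD R).
      by rewrite -absF; apply: le_integral_abse.
    by rewrite -absG; apply: le_integral_abse.
have aeW : \forall x \ae mu, ~ W x.
  by exists W; split => // x /= /contrapT.
apply: filterS2 hST aeW => x hx nW.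
have [N hN] : exists N, ~ (A N `|` B N) x.
  apply/existsNP => h; apply: nW => N _; exact: h N.
have sq (z : R) : ~ (setT `&` [set x | (`|(z ^+ 2)%:E| >= a%:E)%E]) x -> `|z| < eps / 4.
  move=> hz; rewrite ltr_norml; rewrite /a in hz.
  have : z ^+ 2 < (eps / 4) ^+ 2.
    rewrite ltNge; apply/negP => h; apply: hz; split => //=.
    by rewrite lee_fin ger0_norm ?sqr_ge0.
  move=> h2; apply/andP; split; nra.
have h1 : `|F x - S N x| < eps / 4 by apply: sq => h; apply: hN; left.
have h2 : `|G x - T N x| < eps / 4 by apply: sq => h; apply: hN; right.
have h3 := hx N.
have -> : F x - G x = (F x - S N x) + ((S N x - T N x) - (G x - T N x)) by ring.
apply: (le_trans (ler_normD _ _)).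
apply: (le_trans (lerD (lexx _) (ler_normB _ _))).
lra.
Qed.
Lemma split_bound (R : realType) (e t q : nat -> R) (K : nat) (B : R) :
  (forall n, 0 <= t n) -> (forall n, 0 <= e n <= 1) -> (forall n, e n * t n <= q n) ->
  (forall N, \sum_(K <= n < N) t n <= B) ->
  forall N, \sum_(n < N) e n * t n <= \sum_(n < K) q n + B.
Proof.
move=> t0 e01 etq hB N.
have et0 n : 0 <= e n * t n by rewrite mulr_ge0 // (andP (e01 n)).1.
have q0 n : 0 <= q n by apply: le_trans (etq n).
have B0 : 0 <= B by apply: le_trans (hB K); rewrite big_geq.
case: (leqP N K) => hNK.
  rewrite -[X in X <= _]addr0; apply: lerD => //.
  rewrite -(big_mkord xpredT (fun n => e n * t n)) -(big_mkord xpredT q).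
  rewrite (big_cat_nat (n:=N) (p:=K)) //=.
  rewrite -[X in X <= _]addr0; apply: lerD; last by apply: sumr_ge0 => i _.
  by apply: ler_sum => i _.
rewrite -(big_mkord xpredT (fun n => e n * t n)) -(big_mkord xpredT q).
rewrite (big_cat_nat (n:=K) (p:=N)) //=; last exact: ltnW.
apply: lerD; first by apply: ler_sum => i _.
apply: le_trans (hB N); apply: ler_sum => i _.
by rewrite ler_piMl // (andP (e01 i)).2.
Qed.

Theorem theorem4p3
  (R : realType) (d : measure_display) (M : measurableType d)
  (mu : {measure set M -> \bar R})
  (Y : completeNormedModType R) (ip : Y -> Y -> R)
  (A : (M -> R) -> Y)
  (sigma : nat -> R) (u : nat -> Y) (v : nat -> M -> R)
  (c : nat -> R) (c0 : R) :
  inner_product_on ip ->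
  separable_space Y ->
  (* singular value decomposition of A : L^2(mu) -> Y *)
  ip_orthonormal ip u ->
  L2_orthonormal mu v ->
  (forall n, 0 < sigma n) ->
  {homo sigma : m n / (m <= n)%N >-> n <= m} ->
  sigma @ \oo --> 0 ->
  (forall f, is_L2 mu f ->
     (fun N => \sum_(n < N) (sigma n * L2ip mu f (v n)) *: u n) @ \oo --> A f) ->
  (* weights *)
  0 < c0 -> (forall n, c0 <= c n) ->
  forall y : Y,
  (* y in U *)
  (\sum_(0 <= n <oo) ((`|ip y (u n)| / sigma n)%:E * Linf_norm mu (v n))
     < +oo)%E ->
  (* F represents A^dagger y, G alpha represents T^c_alpha y *)
  forall (F : M -> R) (G : R -> M -> R),
  is_L2_series mu v (fun n => ip y (u n) / sigma n) F ->
  (forall alpha, 0 < alpha ->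
     is_L2_series mu v
       (fun n => sigma n / (sigma n ^+ 2 + alpha * c n) * ip y (u n)) (G alpha)) ->
  (Linf_norm mu (fun x => F x - G alpha x)%R @[alpha --> 0^'+] --> 0%E)%E.
Proof.
move=> _ _ _ [vL2 _] sig0 _ _ _ c00 cc0 y hU F G [[mF _] cF] hG.
set f := fun alpha => Linf_norm mu (fun x => F x - G alpha x).
have f0 a : (0 <= f a)%E by exact: Lnorm_ge0.
have [muT|muT] := boolP (0 < mu setT)%E; last first.
  have -> : f = fun=> 0%E.
    by apply: funext => a; rewrite /f /Linf_norm unlock /= (negbTE muT).
  exact: cvg_cst.
pose b n := ip y (u n) / sigma n.
pose L n := Linf_norm mu (v n).
have L0 n : (0 <= L n)%E by exact: Lnorm_ge0.
have LE n : L n = ess_sup mu (abse \o (EFin \o v n)).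
  by rewrite /L /Linf_norm unlock /= muT.
have aeL n : \forall x \ae mu, (`|v n x|%:E <= L n)%E.
  by rewrite LE; apply: filterS (ess_sup_ge mu (abse \o (EFin \o v n))) => x.
pose term n := ((`|ip y (u n)| / sigma n)%:E * L n)%E.
have hU' : (\sum_(0 <= k <oo) term k < +oo)%E := hU.
have hbn n : `|b n| = `|ip y (u n)| / sigma n.
  by rewrite /b normrM normfV (gtr0_norm (sig0 n)).
have term0 n : (0 <= term n)%E.
  by rewrite mule_ge0 // lee_fin divr_ge0 // ltW.
have termle n : (term n <= \sum_(0 <= k <oo) term k)%E.
  rewrite (@nneseriesD1 R term n xpredT) //; apply: leeDl.
  by apply: nneseries_ge0 => k _ _; exact: term0.
have finL n : b n != 0 -> L n \is a fin_num.
  move=> bn0; rewrite ge0_fin_numE // ltNge; apply/negP => Ly.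
  have : (term n < +oo)%E by apply: le_lt_trans (termle n) hU'.
  rewrite /term.
  have -> : L n = +oo%E by apply/eqP; rewrite eq_le leey Ly.
  by rewrite gt0_muley ?ltxx // lte_fin -hbn normr_gt0.
pose l n := fine (L n).
pose t n := `|b n| * l n.
have t0 n : 0 <= t n by rewrite mulr_ge0 // fine_ge0.
have tE n : (t n)%:E = term n.
  rewrite /term -hbn /t.
  have [->|bn0] := eqVneq (b n) 0; first by rewrite normr0 !mul0r mul0e.
  by rewrite EFinM fineK // finL.
have aeE : \forall x \ae mu, forall n, `|b n * v n x| <= t n.
  apply: ae_foralln => n; apply: filterS (aeL n) => x hx.
  rewrite normrM /t.
  have [->|bn0] := eqVneq (b n) 0; first by rewrite normr0 !mul0r.
  by apply: ler_wpM2l => //; rewrite -lee_fin /l fineK //; exact: finL.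
have tail eps : 0 < eps -> exists K, forall N, \sum_(K <= n < N) t n <= eps.
  move=> e0.
  have := @nneseries_tail_cvg R term xpredT hU' (fun k _ => term0 k).
  move=> /fine_cvgP [finT /cvgrPdist_le /(_ eps e0) hT].
  have [K _ hK] := filterI finT hT.
  exists K => N.
  have [fK hK'] := hK K (leqnn K).
  rewrite -lee_fin -sumEFin.
  under eq_bigr do rewrite tE.
  apply: le_trans (nneseries_lim_ge _ _) _; first by move=> k _ _; exact: term0.
  rewrite -(fineK fK) lee_fin; move: hK'; rewrite sub0r normrN.
  by apply: le_trans; exact: ler_norm.
have cpos n : 0 < c n := lt_le_trans c00 (cc0 n).
have Hmain eps : 0 < eps -> \forall a \near 0^'+, (f a <= eps%:E)%E.
  move=> e0.
  have e4 : 0 < eps / 4 by rewrite divr_gt0.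
  have [K hK] := tail (eps / 4) e4.
  pose Q := \sum_(n < K) (c n * t n / sigma n ^+ 2).
  have Q0 : 0 <= Q.
    by apply: sumr_ge0 => n _; rewrite divr_ge0 ?sqr_ge0 // mulr_ge0 // ltW.
  have Q1 : 0 < Q + 1 by lra.
  near=> a.
  have a0 : 0 < a by near: a; exact: nbhs_right_gt.
  have aQ : a < eps / 4 / (Q + 1).
    by near: a; apply: nbhs_right_lt; rewrite divr_gt0.
  move: aQ; rewrite ltr_pdivlMr // mulrDr mulr1 => aQ.
  rewrite /f /Linf_norm unlock /= muT; apply/ess_supP.
  have [[mG _] cG] := hG a a0.
  pose e n := a * c n / (sigma n ^+ 2 + a * c n).
  have den n : 0 < sigma n ^+ 2 + a * c n.
    by rewrite ltr_wpDl ?sqr_ge0 // mulr_gt0.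
  have e01 n : 0 <= e n <= 1.
    apply/andP; split; first by rewrite divr_ge0 // ?mulr_ge0 // ltW.
    by rewrite ler_pdivrMr // mul1r lerDr sqr_ge0.
  have etq n : e n * t n <= a * (c n * t n / sigma n ^+ 2).
    have -> : a * (c n * t n / sigma n ^+ 2) = (a * c n / sigma n ^+ 2) * t n.
      by ring.
    apply: ler_wpM2r => //; rewrite /e; apply: ler_wpM2l; first by rewrite mulr_ge0 // ltW.
    rewrite lef_pV2 ?posrE ?exprn_gt0 // lerDl mulr_ge0 // ltW //.
  have deq n : ip y (u n) / sigma n - sigma n / (sigma n ^+ 2 + a * c n) * ip y (u n)
      = e n * b n.
    rewrite /e /b; have := sig0 n; have := den n => hd hs.
    field; apply/andP; split; exact: lt0r_neq0.
  have hae : \forall x \ae mu, `|F x - G a x| <= eps.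
  apply: (@key _ _ _ mu F (G a) (fun N x => \sum_(n < N) ip y (u n) / sigma n * v n x)
    (fun N x => \sum_(n < N) sigma n / (sigma n ^+ 2 + a * c n) * ip y (u n) * v n x)
    eps e0 mF mG _ _ cF cG).
  - move=> N; apply: measurable_sum => n.
    by apply: measurable_funM; [exact: measurable_cst | exact: (vL2 n).1].
  - move=> N; apply: measurable_sum => n.
    by apply: measurable_funM; [exact: measurable_cst | exact: (vL2 n).1].
  - apply: filterS aeE => x hx N.
    rewrite -sumrB.
    under eq_bigr do rewrite -mulrBl deq -mulrA.
    apply: (le_trans (ler_norm_sum _ _ _)).
    apply: (@le_trans _ _ (\sum_(n < N) e n * t n)).
      apply: ler_sum => n _; rewrite normrM (ger0_norm (andP (e01 n)).1).
      by apply: ler_wpM2l; [exact: (andP (e01 n)).1 | exact: hx].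
    apply: le_trans (split_bound _ _ _ _ _ _ t0 e01 etq hK N) _.
    rewrite -mulr_sumr -/Q; lra.
  by apply: filterS hae => x; rewrite /= lee_fin.
apply/fine_cvgP; split.
  have := Hmain 1 ltr01; apply: filterS => a ha.
  by rewrite ge0_fin_numE // (le_lt_trans ha) // ltry.
apply/cvgrPdist_le => eps e0.
have := Hmain eps e0; apply: filterS => a ha /=.
have fa : f a \is a fin_num by rewrite ge0_fin_numE // (le_lt_trans ha) // ltry.
rewrite sub0r normrN ger0_norm ?fine_ge0 //.
by rewrite -lee_fin fineK.
Unshelve. all: by end_near.
Qed.
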